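(* Let $\alpha\in(\pi/8,3\pi/8)$ with $\alpha/\pi\notin\mathbb{Q}$, $\beta=\alpha-\pi/2$, $\rho=0.01$, $A_1=\rho R(\alpha)$, $A_2=\rho R(\beta)$ where $R(\theta)=\begin{bmatrix}\cos\theta&-\sin\theta\\ \sin\theta&\cos\theta\end{bmatrix}$, and $c(x)=x_1^2+2x_2^2$ on $\mathbb{R}^2$. Let $J^\star$ be the optimal value function, $\tilde J^\star(\theta)=J^\star([\cos\theta,\sin\theta]^\top)$, $\Delta\tilde J^\star(\theta)=\tilde J^\star(\theta+\alpha)-\tilde J^\star(\theta+\beta)$, $\mu=\pi/4-\alpha$, $\delta=0.01$, and let $\nu\in(\mu-\delta,\mu+\delta)$ satisfy $\Delta\tilde J^\star(\nu)=0$. Let $I=[\nu+\beta,\nu+\alpha)$ and $T:I\to I$ be defined by $T(\theta)=\theta+\alpha$ if $\theta<\nu$ and $T(\theta)=\theta+\beta$ if $\theta\geq\nu$. Then for every $k\in\mathbb{N}$, $\tilde J^\star$ is not differentiable at $T^{-k}\nu$.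
   Context: $T$ is a bijection of $I$ (an interval exchange map), so $T^{-k}$ is well defined. For the switched linear system $\xi(t+1)=A_{\sigma(t)}\xi(t)$ with $\sigma:\mathbb{N}\to\{1,2\}$, $J^\star(x)=\inf_\sigma\sum_{t=0}^\infty c(\xi(t,x,\sigma))$ where $\xi(t,x,\sigma)$ is the solution with $\xi(0)=x$. *)

(* Defs.v *)
From Stdlib Require Import Reals QArith Lra.
From Coquelicot Require Import Coquelicot.
Open Scope R_scope.

Definition rot (th : R) (x : R * R) : R * R :=
  (cos th * fst x - sin th * snd x, sin th * fst x + cos th * snd x).

Definition rho : R := 1 / 100.

Definition beta_of (alpha : R) : R := alpha - PI / 2.

(* A_1 = rho R(alpha), A_2 = rho R(beta).  Mode [true] = 1, [false] = 2. *)
Definition Amat (alpha : R) (m : bool) (x : R * R) : R * R :=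
  let y := rot (if m then alpha else beta_of alpha) x in (rho * fst y, rho * snd y).

Definition cost (x : R * R) : R := fst x ^ 2 + 2 * snd x ^ 2.

Fixpoint traj (alpha : R) (sigma : nat -> bool) (x : R * R) (t : nat) : R * R :=
  match t with
  | O => x
  | S t' => Amat alpha (sigma t') (traj alpha sigma x t')
  end.

Definition costs (alpha : R) (x : R * R) (v : R) : Prop :=
  exists sigma : nat -> bool, is_series (fun t => cost (traj alpha sigma x t)) v.

Definition Jstar (alpha : R) (x : R * R) : R :=
  real (Glb_Rbar (costs alpha x)).

Definition Jt (alpha : R) (th : R) : R := Jstar alpha (cos th, sin th).

Definition DJt (alpha : R) (th : R) : R :=
  Jt alpha (th + alpha) - Jt alpha (th + beta_of alpha).

Definition Tmap (alpha nu : R) (th : R) : R :=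
  if Rlt_dec th nu then th + alpha else th + beta_of alpha.

Definition in_I (alpha nu th : R) : Prop :=
  nu + beta_of alpha <= th < nu + alpha.

(* Main.v *)
Require Import Defs.
From Stdlib Require Import Reals QArith Lra.
From Coquelicot Require Import Coquelicot.
Open Scope R_scope.

Definition r : R := rho ^ 2.
Definition ang (alpha : R) (m : bool) : R := if m then alpha else beta_of alpha.
Fixpoint phi (alpha : R) (s : nat -> bool) (t : nat) : R :=
  match t with O => 0 | S t' => phi alpha s t' + ang alpha (s t') end.
Definition term alpha s th t := r ^ t * (1 + sin (th + phi alpha s t) ^ 2).
Definition Sv alpha s th := Series (term alpha s th).
Definition cc th := 1 + sin th ^ 2.
Definition shift (s : nat -> bool) := fun n => s (S n).
Definition scons (m : bool) (s : nat -> bool) := fun n => match n with O => m | S n => s n end.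

Lemma r_val : r = 1/10000.
Proof. unfold r, rho. simpl. field. Qed.

Lemma exs_plus (a b : nat -> R) : ex_series a -> ex_series b -> ex_series (fun n => a n + b n).
Proof. intros. apply (ex_series_plus a b); auto. Qed.
Lemma exs_minus (a b : nat -> R) : ex_series a -> ex_series b -> ex_series (fun n => a n - b n).
Proof. intros. apply (ex_series_minus a b); auto. Qed.
Lemma exs_scal (c : R) (a : nat -> R) : ex_series a -> ex_series (fun n => c * a n).
Proof. intros. apply (ex_series_scal_l c a); auto. Qed.

Lemma Series_zero : Series (fun _ => 0) = 0.
Proof.
  rewrite (Series_ext _ (fun n => 0 * 1)) by (intros; ring).
  rewrite Series_scal_l. ring.
Qed.

Lemma series_le_gen (a b : nat -> R) : (forall n, a n <= b n) -> ex_series a -> ex_series b ->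
  Series a <= Series b.
Proof.
  intros H Ha Hb.
  assert (0 <= Series (fun n => b n - a n)).
  { rewrite <- Series_zero. apply Series_le. intros n; specialize (H n); lra.
    apply exs_minus; auto. }
  rewrite Series_minus in H0 by auto. lra.
Qed.

Lemma ex_geom (C : R) : ex_series (fun n => C * r ^ n).
Proof.
  apply exs_scal. exists (/ (1 - r)). apply is_series_geom. rewrite r_val, Rabs_pos_eq; lra.
Qed.

Lemma Series_geom (C : R) : Series (fun n => C * r ^ n) = C / (1 - r).
Proof.
  rewrite Series_scal_l. rewrite (is_series_unique _ (/ (1 - r))). field. rewrite r_val; lra.
  apply is_series_geom. rewrite r_val, Rabs_pos_eq; lra.
Qed.

Lemma term_bounds alpha s th t : 0 <= term alpha s th t <= 2 * r ^ t.
Proof.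
  unfold term. assert (0 < r ^ t) by (apply pow_lt; rewrite r_val; lra).
  pose proof (SIN_bound (th + phi alpha s t)).
  assert (0 <= sin (th + phi alpha s t) ^ 2 <= 1) by nra. split; nra.
Qed.

Lemma ex_term alpha s th : ex_series (term alpha s th).
Proof.
  apply (@ex_series_le R_AbsRing R_CompleteNormedModule _ (fun n => 2 * r ^ n)); [|apply ex_geom].
  intros n. change (norm (term alpha s th n)) with (Rabs (term alpha s th n)).
  pose proof (term_bounds alpha s th n). rewrite Rabs_pos_eq; lra.
Qed.

Lemma Sv_nonneg alpha s th : 0 <= Sv alpha s th.
Proof. unfold Sv. rewrite <- Series_zero. apply Series_le. intros n; split; [lra | apply term_bounds]. apply ex_term. Qed.

Lemma traj_explicit alpha s th t :
  traj alpha s (cos th, sin th) t = (rho ^ t * cos (th + phi alpha s t), rho ^ t * sin (th + phi alpha s t)).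
Proof.
  induction t; simpl.
  - rewrite Rplus_0_r, !Rmult_1_l. reflexivity.
  - rewrite IHt. unfold Amat, rot. simpl.
    replace (th + (phi alpha s t + ang alpha (s t))) with ((th + phi alpha s t) + ang alpha (s t)) by ring.
    set (x := th + phi alpha s t). rewrite (cos_plus x), (sin_plus x).
    destruct (s t); unfold ang; simpl; apply injective_projections; simpl; ring.
Qed.

Lemma cost_term alpha s th t : cost (traj alpha s (cos th, sin th) t) = term alpha s th t.
Proof.
  rewrite traj_explicit. unfold cost, term, r. simpl fst; simpl snd.
  replace ((rho ^ 2) ^ t) with ((rho ^ t) ^ 2) by (rewrite <- !pow_mult, Nat.mul_comm; reflexivity).
  set (x := th + phi alpha s t).
  assert (Hc : cos x ^ 2 = 1 - sin x ^ 2) by (pose proof (sin2_cos2 x); unfold Rsqr in *; nra).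
  replace ((rho ^ t * cos x) ^ 2) with ((rho ^ t) ^ 2 * cos x ^ 2) by ring.
  rewrite Hc. ring.
Qed.

Definition Jv alpha th := real (Glb_Rbar (fun v => exists s, v = Sv alpha s th)).

Lemma Jt_eq alpha th : Jt alpha th = Jv alpha th.
Proof.
  unfold Jt, Jstar, Jv. f_equal. apply Glb_Rbar_eqset. intros v; split.
  - intros [s Hs]. exists s. unfold Sv. symmetry. apply is_series_unique.
    eapply is_series_ext; [|exact Hs]. intros; apply cost_term.
  - intros [s ->]. exists s. apply is_series_ext with (term alpha s th).
    intros; symmetry; apply cost_term. apply Series_correct; apply ex_term.
Qed.

Lemma glb_props (f : (nat -> bool) -> R) : (forall s, 0 <= f s) ->
  (forall s, real (Glb_Rbar (fun v => exists s, v = f s)) <= f s) /\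
  (forall B, (forall s, B <= f s) -> B <= real (Glb_Rbar (fun v => exists s, v = f s))).
Proof.
  intros Hpos.
  destruct (Glb_Rbar_correct (fun v => exists s, v = f s)) as [Hlb Hg].
  revert Hlb Hg. generalize (Glb_Rbar (fun v => exists s, v = f s)). intros G Hlb Hg.
  assert (lb0 : Rbar_le 0 G). { apply Hg. intros v [s ->]. simpl. apply Hpos. }
  assert (Gle : forall s, Rbar_le G (f s)). { intro s. apply Hlb. exists s; reflexivity. }
  destruct G as [g| |]; simpl in *.
  - split; [intros s; apply (Gle s)|]. intros B HB.
    assert (Rbar_le B g) by (apply Hg; intros v [s ->]; simpl; apply HB). exact H.
  - destruct (Gle (fun _ => true)).
  - destruct lb0.
Qed.

Lemma Jv_le alpha th s : Jv alpha th <= Sv alpha s th.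
Proof. apply (glb_props (fun s => Sv alpha s th)). intros; apply Sv_nonneg. Qed.

Lemma Jv_ge alpha th B : (forall s, B <= Sv alpha s th) -> B <= Jv alpha th.
Proof. apply (glb_props (fun s => Sv alpha s th)). intros; apply Sv_nonneg. Qed.

Lemma phi_shift alpha s t : phi alpha s (S t) = ang alpha (s O) + phi alpha (shift s) t.
Proof.
  induction t.
  - simpl. ring.
  - change (phi alpha s (S (S t))) with (phi alpha s (S t) + ang alpha (s (S t))).
    rewrite IHt. simpl. unfold shift. ring.
Qed.

Lemma Sv_bellman alpha s th :
  Sv alpha s th = cc th + r * Sv alpha (shift s) (th + ang alpha (s O)).
Proof.
  unfold Sv. rewrite Series_incr_1 by apply ex_term.
  rewrite <- Series_scal_l. f_equal.
  - unfold term, cc. simpl. rewrite Rplus_0_r. ring.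
  - apply Series_ext. intros n. unfold term. rewrite phi_shift.
    replace (th + (ang alpha (s 0%nat) + phi alpha (shift s) n)) with
      (th + ang alpha (s 0%nat) + phi alpha (shift s) n) by ring.
    simpl. ring.
Qed.
Lemma abs_sin_pos y : 0 < y -> Rabs (sin y) <= y.
Proof.
  intros H. pose proof (sin_lt_x y H). pose proof (SIN_bound y).
  apply Rabs_le. split; [|lra].
  destruct (Rle_dec y 1). 
  - assert (PI > 3) by (pose proof PI2_3_2; lra).
    pose proof (sin_ge_0 y). lra.
  - lra.
Qed.

Lemma abs_sin_le z : Rabs (sin z) <= Rabs z.
Proof.
  destruct (Rtotal_order z 0) as [H|[H|H]].
  - replace (sin z) with (- sin (- z)) by (rewrite sin_neg; ring).
    rewrite Rabs_Ropp, (Rabs_left z) by lra. apply abs_sin_pos; lra.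
  - subst. rewrite sin_0. right; reflexivity.
  - rewrite (Rabs_pos_eq z) by lra. apply abs_sin_pos; lra.
Qed.

Lemma sin_sq_le z : sin z ^ 2 <= z ^ 2.
Proof.
  pose proof (abs_sin_le z). rewrite <- (pow2_abs (sin z)), <- (pow2_abs z).
  pose proof (Rabs_pos (sin z)). nra.
Qed.

Lemma sin_lip p q : Rabs (sin p - sin q) <= Rabs (p - q).
Proof.
  rewrite form4. rewrite !Rabs_mult.
  pose proof (abs_sin_le ((p - q) / 2)).
  pose proof (COS_bound ((p + q) / 2)).
  assert (Rabs (cos ((p + q) / 2)) <= 1) by (apply Rabs_le; lra).
  replace (Rabs ((p - q) / 2)) with (Rabs (p - q) / 2) in H.
  2:{ unfold Rdiv. rewrite Rabs_mult. rewrite (Rabs_pos_eq (/2)) by lra. reflexivity. }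
  rewrite (Rabs_pos_eq 2) by lra.
  pose proof (Rabs_pos (cos ((p + q) / 2))).
  pose proof (Rabs_pos (sin ((p - q) / 2))). nra.
Qed.

Lemma sin2_lip p q : Rabs (sin p ^ 2 - sin q ^ 2) <= 2 * Rabs (p - q).
Proof.
  replace (sin p ^ 2 - sin q ^ 2) with ((sin p - sin q) * (sin p + sin q)) by ring.
  rewrite Rabs_mult. pose proof (sin_lip p q).
  pose proof (SIN_bound p). pose proof (SIN_bound q).
  assert (Rabs (sin p + sin q) <= 2) by (apply Rabs_le; lra).
  pose proof (Rabs_pos (sin p - sin q)). pose proof (Rabs_pos (sin p + sin q)). nra.
Qed.

Lemma sd_ineq w t : sin (w + t) ^ 2 + sin (w - t) ^ 2 - 2 * sin w ^ 2 <= 2 * t ^ 2.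
Proof.
  rewrite sin_plus, sin_minus.
  pose proof (sin2_cos2 w). pose proof (sin2_cos2 t). unfold Rsqr in *.
  pose proof (sin_sq_le t).
  replace ((sin w * cos t + cos w * sin t) ^ 2 + (sin w * cos t - cos w * sin t) ^ 2 - 2 * sin w ^ 2)
    with (2 * sin t ^ 2 * (cos w ^ 2 - sin w ^ 2)) by (nra).
  assert (cos w ^ 2 - sin w ^ 2 <= 1) by nra.
  assert (0 <= sin t ^ 2) by nra. nra.
Qed.

Lemma Sv_lip alpha s th1 th2 :
  Rabs (Sv alpha s th1 - Sv alpha s th2) <= 2 / (1 - r) * Rabs (th1 - th2).
Proof.
  unfold Sv. rewrite <- Series_minus by apply ex_term.
  assert (Hb : forall n, Rabs (term alpha s th1 n - term alpha s th2 n) <= 2 * Rabs (th1 - th2) * r ^ n).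
  { intros n. unfold term.
    replace (r ^ n * (1 + sin (th1 + phi alpha s n) ^ 2) - r ^ n * (1 + sin (th2 + phi alpha s n) ^ 2))
      with (r ^ n * (sin (th1 + phi alpha s n) ^ 2 - sin (th2 + phi alpha s n) ^ 2)) by ring.
    rewrite Rabs_mult. rewrite (Rabs_pos_eq (r ^ n)) by (apply pow_le; rewrite r_val; lra).
    pose proof (sin2_lip (th1 + phi alpha s n) (th2 + phi alpha s n)).
    replace (th1 + phi alpha s n - (th2 + phi alpha s n)) with (th1 - th2) in H by ring.
    assert (0 <= r ^ n) by (apply pow_le; rewrite r_val; lra). nra. }
  replace (2 / (1 - r) * Rabs (th1 - th2)) with (2 * Rabs (th1 - th2) / (1 - r)) by (field; rewrite r_val; lra).
  rewrite <- Series_geom.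
  assert (E1 : ex_series (fun n => term alpha s th1 n - term alpha s th2 n)) by (apply exs_minus; apply ex_term).
  apply Rabs_le. split.
  - assert (HS : Series (fun n => - (2 * Rabs (th1 - th2)) * r ^ n) = - Series (fun n => 2 * Rabs (th1 - th2) * r ^ n))
      by (rewrite !Series_geom; field; rewrite r_val; lra).
    rewrite <- HS. apply series_le_gen; auto. intros n. specialize (Hb n). apply Rabs_le_between in Hb. lra. apply ex_geom.
  - apply series_le_gen; auto. intros n. specialize (Hb n). apply Rabs_le_between in Hb. lra. apply ex_geom.
Qed.

Lemma Sv_sd alpha s p t :
  Sv alpha s (p + t) + Sv alpha s (p - t) - 2 * Sv alpha s p <= 2 / (1 - r) * t ^ 2.
Proof.
  unfold Sv.
  rewrite <- Series_plus by apply ex_term.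
  rewrite <- Series_scal_l.
  rewrite <- Series_minus.
  2:{ apply exs_plus; apply ex_term. }
  2:{ apply exs_scal; apply ex_term. }
  replace (2 / (1 - r) * t ^ 2) with (2 * t ^ 2 / (1 - r)) by (field; rewrite r_val; lra).
  rewrite <- Series_geom.
  apply series_le_gen.
  - intros n. unfold term.
    set (w := p + phi alpha s n).
    replace (p + t + phi alpha s n) with (w + t) by (unfold w; ring).
    replace (p - t + phi alpha s n) with (w - t) by (unfold w; ring).
    pose proof (sd_ineq w t).
    assert (0 <= r ^ n) by (apply pow_le; rewrite r_val; lra).
    replace (r ^ n * (1 + sin (w + t) ^ 2) + r ^ n * (1 + sin (w - t) ^ 2) - 2 * (r ^ n * (1 + sin w ^ 2)))
      with (r ^ n * (sin (w + t) ^ 2 + sin (w - t) ^ 2 - 2 * sin w ^ 2)) by ring.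
    nra.
  - apply exs_minus. apply exs_plus; apply ex_term. apply exs_scal; apply ex_term.
  - apply ex_geom.
Qed.

Lemma J_bellman alpha th :
  Jt alpha th = cc th + r * Rmin (Jt alpha (th + alpha)) (Jt alpha (th + beta_of alpha)).
Proof.
  rewrite !Jt_eq. assert (Hr : 0 < r) by (rewrite r_val; lra).
  assert (Hup : forall m, Jv alpha th <= cc th + r * Jv alpha (th + ang alpha m)).
  { intros m.
    assert ((Jv alpha th - cc th) / r <= Jv alpha (th + ang alpha m)).
    { apply Jv_ge. intros s'.
      pose proof (Jv_le alpha th (scons m s')).
      rewrite Sv_bellman in H. change (shift (scons m s')) with s' in H.
      simpl in H. apply (Rmult_le_reg_l r); auto.
      replace (r * ((Jv alpha th - cc th) / r)) with (Jv alpha th - cc th) by (field; lra). lra. }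
    apply (Rmult_le_compat_l r) in H; [|lra].
    replace (r * ((Jv alpha th - cc th) / r)) with (Jv alpha th - cc th) in H by (field; lra). lra. }
  apply Rle_antisym.
  - unfold Rmin. destruct (Rle_dec _ _).
    + apply (Hup true).
    + apply (Hup false).
  - apply Jv_ge. intros s. rewrite Sv_bellman.
    pose proof (Jv_le alpha (th + ang alpha (s 0%nat)) (shift s)).
    assert (Rmin (Jv alpha (th + alpha)) (Jv alpha (th + beta_of alpha)) <= Jv alpha (th + ang alpha (s 0%nat))).
    { destruct (s 0%nat); simpl. apply Rmin_l. apply Rmin_r. }
    nra.
Qed.

Definition Lam := r * (2 / (1 - r)).

Lemma Lam_val : 0 < Lam <= 1/4000.
Proof. unfold Lam. rewrite r_val. split. apply Rmult_lt_0_compat; [lra|]. apply Rdiv_lt_0_compat; lra.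
  unfold Rdiv. rewrite Rmult_1_l. apply Rmult_le_reg_r with (1 - 1/10000); [lra|].
  field_simplify; lra. Qed.

Lemma J_E_half alpha th1 th2 :
  Jt alpha th1 - cc th1 <= Jt alpha th2 - cc th2 + Lam * Rabs (th1 - th2).
Proof.
  rewrite !Jt_eq.
  assert (Jv alpha th1 - cc th1 + cc th2 - Lam * Rabs (th1 - th2) <= Jv alpha th2).
  { apply Jv_ge. intros s.
    pose proof (Jv_le alpha th1 s).
    rewrite Sv_bellman in H |- *.
    pose proof (Sv_lip alpha (shift s) (th1 + ang alpha (s 0%nat)) (th2 + ang alpha (s 0%nat))).
    replace (th1 + ang alpha (s 0%nat) - (th2 + ang alpha (s 0%nat))) with (th1 - th2) in H0 by ring.
    apply Rabs_le_between in H0.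
    assert (Hr : 0 < r) by (rewrite r_val; lra).
    unfold Lam. nra. }
  lra.
Qed.

Lemma J_E_lip alpha th1 th2 :
  Rabs ((Jt alpha th1 - cc th1) - (Jt alpha th2 - cc th2)) <= Lam * Rabs (th1 - th2).
Proof.
  pose proof (J_E_half alpha th1 th2). pose proof (J_E_half alpha th2 th1).
  rewrite Rabs_minus_sym in H0. apply Rabs_le. lra.
Qed.

Lemma cc_lip a b : Rabs (cc a - cc b) <= 2 * Rabs (a - b).
Proof. unfold cc. replace (1 + sin a ^ 2 - (1 + sin b ^ 2)) with (sin a ^ 2 - sin b ^ 2) by ring. apply sin2_lip. Qed.

Lemma J_lip alpha a b : Rabs (Jt alpha a - Jt alpha b) <= (2 + Lam) * Rabs (a - b).
Proof.
  pose proof (J_E_lip alpha a b). pose proof (cc_lip a b).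
  replace (Jt alpha a - Jt alpha b) with ((Jt alpha a - cc a - (Jt alpha b - cc b)) + (cc a - cc b)) by ring.
  eapply Rle_trans. apply Rabs_triang. lra.
Qed.

Lemma J_sd alpha p t :
  Jt alpha (p + t) + Jt alpha (p - t) - 2 * Jt alpha p <= 2 / (1 - r) * t ^ 2.
Proof.
  rewrite !Jt_eq.
  assert ((Jv alpha (p + t) + Jv alpha (p - t) - 2 / (1 - r) * t ^ 2) / 2 <= Jv alpha p).
  { apply Jv_ge. intros s. pose proof (Sv_sd alpha s p t).
    pose proof (Jv_le alpha (p + t) s). pose proof (Jv_le alpha (p - t) s). lra. }
  lra.
Qed.

Lemma cc_sd p t : cc (p + t) + cc (p - t) - 2 * cc p <= 2 * t ^ 2.
Proof. unfold cc. pose proof (sd_ineq p t). lra. Qed.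

Lemma PI_bounds : 3 < PI <= 4.
Proof. pose proof PI2_3_2. pose proof PI_4. lra. Qed.

Lemma sin_half z : 0 <= z <= 3/2 -> z / 2 <= sin z.
Proof.
  intros Hz. pose proof PI_bounds.
  destruct (sin_bound z 0 ltac:(lra) ltac:(lra)) as [H1 _].
  replace (sin_approx z (2 * 0 + 1)) with (z - z ^ 3 / 6) in H1.
  2:{ unfold sin_approx, sin_term. simpl sum_f_R0. simpl. field. }
  nra.
Qed.

Lemma sin_mid p : PI / 8 - 1/50 <= p <= 7 * PI / 8 + 1/50 -> 1/6 <= sin p.
Proof.
  intros Hp. pose proof PI_bounds.
  set (z0 := PI / 8 - 1/50).
  assert (H0 : z0 / 2 <= sin z0) by (apply sin_half; unfold z0; lra).
  assert (1/6 <= z0 / 2) by (unfold z0; lra).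
  destruct (Rle_dec p (PI / 2)).
  - assert (sin z0 <= sin p) by (apply sin_incr_1; unfold z0 in *; lra). lra.
  - rewrite <- sin_PI_x.
    assert (sin z0 <= sin (PI - p)) by (apply sin_incr_1; unfold z0 in *; lra). lra.
Qed.

Lemma cc_beta alpha x : cc (x + beta_of alpha) = 1 + cos (x + alpha) ^ 2.
Proof.
  unfold beta_of, cc. replace (x + (alpha - PI / 2)) with ((x + alpha) - PI / 2) by ring.
  rewrite sin_minus, sin_PI2, cos_PI2. ring.
Qed.

Lemma X_ident x A :
  (1 + sin x ^ 2) - (1 + cos x ^ 2) - ((1 + sin A ^ 2) - (1 + cos A ^ 2)) = 2 * sin (x + A) * sin (x - A).
Proof.
  rewrite sin_plus, sin_minus.
  pose proof (sin2_cos2 x). pose proof (sin2_cos2 A). unfold Rsqr in *.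
  assert (cos x ^ 2 = 1 - sin x ^ 2) by nra.
  assert (cos A ^ 2 = 1 - sin A ^ 2) by nra.
  transitivity (2 * (sin x ^ 2 * cos A ^ 2 - cos x ^ 2 * sin A ^ 2)).
  - rewrite H1, H2. ring.
  - ring.
Qed.

Lemma D_decomp alpha nu th :
  DJt alpha th - DJt alpha nu =
  2 * sin (th + nu + 2 * alpha) * sin (th - nu)
  + ((Jt alpha (th + alpha) - cc (th + alpha)) - (Jt alpha (nu + alpha) - cc (nu + alpha)))
  - ((Jt alpha (th + beta_of alpha) - cc (th + beta_of alpha)) - (Jt alpha (nu + beta_of alpha) - cc (nu + beta_of alpha))).
Proof.
  unfold DJt.
  pose proof (X_ident (th + alpha) (nu + alpha)).
  replace (th + alpha + (nu + alpha)) with (th + nu + 2 * alpha) in H by ring.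
  replace (th + alpha - (nu + alpha)) with (th - nu) in H by ring.
  rewrite <- H.
  rewrite !cc_beta. unfold cc. ring.
Qed.

Lemma D_err alpha nu th :
  Rabs (((Jt alpha (th + alpha) - cc (th + alpha)) - (Jt alpha (nu + alpha) - cc (nu + alpha)))
  - ((Jt alpha (th + beta_of alpha) - cc (th + beta_of alpha)) - (Jt alpha (nu + beta_of alpha) - cc (nu + beta_of alpha))))
  <= 2 * Lam * Rabs (th - nu).
Proof.
  pose proof (J_E_lip alpha (th + alpha) (nu + alpha)).
  pose proof (J_E_lip alpha (th + beta_of alpha) (nu + beta_of alpha)).
  replace (th + alpha - (nu + alpha)) with (th - nu) in H by ring.
  replace (th + beta_of alpha - (nu + beta_of alpha)) with (th - nu) in H0 by ring.
  eapply Rle_trans. apply Rabs_triang. rewrite Rabs_Ropp. lra.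
Qed.

Lemma D_pos alpha nu
  (Halpha : PI / 8 < alpha < 3 * PI / 8)
  (Hnu : PI / 4 - alpha - (1/100) < nu < PI / 4 - alpha + (1/100))
  (Hroot : DJt alpha nu = 0) th :
  nu < th < nu + alpha -> (th - nu) / 10 <= DJt alpha th.
Proof.
  intros Hth. pose proof PI_bounds. pose proof Lam_val.
  pose proof (D_decomp alpha nu th). pose proof (D_err alpha nu th).
  rewrite Hroot in H1. rewrite (Rabs_pos_eq (th - nu)) in H2 by lra.
  apply Rabs_le_between in H2.
  assert (Hq : (th - nu) / 2 <= sin (th - nu)) by (apply sin_half; lra).
  assert (Hp : 1/6 <= sin (th + nu + 2 * alpha)) by (apply sin_mid; lra).
  assert ((th - nu) / 12 <= sin (th + nu + 2 * alpha) * sin (th - nu)) by nra.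
  nra.
Qed.

Lemma D_neg alpha nu
  (Halpha : PI / 8 < alpha < 3 * PI / 8)
  (Hnu : PI / 4 - alpha - (1/100) < nu < PI / 4 - alpha + (1/100))
  (Hroot : DJt alpha nu = 0) th :
  nu + beta_of alpha <= th < nu -> DJt alpha th <= (th - nu) / 10.
Proof.
  intros Hth. unfold beta_of in Hth. pose proof PI_bounds. pose proof Lam_val.
  pose proof (D_decomp alpha nu th). pose proof (D_err alpha nu th).
  rewrite Hroot in H1. rewrite (Rabs_left (th - nu)) in H2 by lra.
  apply Rabs_le_between in H2.
  assert (Hq : (nu - th) / 2 <= sin (nu - th)) by (apply sin_half; lra).
  replace (sin (nu - th)) with (- sin (th - nu)) in Hq by (rewrite <- sin_neg; f_equal; ring).
  assert (Hp : 1/6 <= sin (th + nu + 2 * alpha)) by (apply sin_mid; lra).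
  assert (sin (th + nu + 2 * alpha) * sin (th - nu) <= (th - nu) / 12) by nra.
  nra.
Qed.

Lemma no_deriv_nu alpha nu
  (Halpha : PI / 8 < alpha < 3 * PI / 8)
  (Hnu : PI / 4 - alpha - (1/100) < nu < PI / 4 - alpha + (1/100))
  (Hroot : DJt alpha nu = 0) : ~ ex_derive (Jt alpha) nu.
Proof.
  intros [d Hd]. apply is_derive_Reals in Hd.
  pose proof PI_bounds.
  assert (Hr : r = 1/10000) by apply r_val.
  assert (HK : 2 / (1 - r) <= 3).
  { replace (2 / (1 - r)) with (20000/9999) by (rewrite Hr; field). lra. }
  assert (Heps : 0 < r / 40) by (rewrite Hr; lra).
  destruct (Hd (r / 40) Heps) as [dl Hdl].
  pose proof (cond_pos dl) as Hdl0.
  set (tau := Rmin (dl / 2) (Rmin (alpha / 2) (r / 200))).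
  assert (Ht1 : 0 < tau).
  { unfold tau. apply Rmin_pos. lra. apply Rmin_pos. lra. rewrite Hr; lra. }
  assert (Ht2 : tau <= dl / 2) by apply Rmin_l.
  assert (Ht3 : tau <= alpha / 2) by (eapply Rle_trans; [apply Rmin_r| apply Rmin_l]).
  assert (Ht4 : tau <= r / 200) by (eapply Rle_trans; [apply Rmin_r| apply Rmin_r]).
  clearbody tau.
  pose proof (Hdl tau ltac:(lra) ltac:(rewrite Rabs_pos_eq; lra)) as H1.
  pose proof (Hdl (- tau) ltac:(lra) ltac:(rewrite Rabs_Ropp, Rabs_pos_eq; lra)) as H2.
  replace (nu + - tau) with (nu - tau) in H2 by ring.
  apply Rabs_lt_between in H1. apply Rabs_lt_between in H2.
  set (a1 := (Jt alpha (nu + tau) - Jt alpha nu) / tau) in H1.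
  set (a2 := (Jt alpha (nu - tau) - Jt alpha nu) / - tau) in H2.
  assert (E1 : Jt alpha (nu + tau) - Jt alpha nu = a1 * tau) by (unfold a1; field; lra).
  assert (E2 : Jt alpha (nu - tau) - Jt alpha nu = a2 * (- tau)) by (unfold a2; field; lra).
  assert (Hlow : - (r / 20) * tau <= Jt alpha (nu + tau) + Jt alpha (nu - tau) - 2 * Jt alpha nu) by nra.
  pose proof (J_bellman alpha (nu + tau)) as B1.
  pose proof (J_bellman alpha (nu - tau)) as B2.
  pose proof (J_bellman alpha nu) as B0.
  assert (Dp : tau / 10 <= DJt alpha (nu + tau)).
  { replace (tau / 10) with ((nu + tau - nu) / 10) by field. apply D_pos; auto; lra. }
  unfold DJt in Dp, Hroot.
  rewrite (Rmin_left (Jt alpha (nu + alpha))) in B0 by lra.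
  pose proof (Rmin_r (Jt alpha (nu + tau + alpha)) (Jt alpha (nu + tau + beta_of alpha))).
  pose proof (Rmin_l (Jt alpha (nu - tau + alpha)) (Jt alpha (nu - tau + beta_of alpha))).
  pose proof (J_sd alpha (nu + alpha) tau) as SD.
  replace (nu + alpha + tau) with (nu + tau + alpha) in SD by ring.
  replace (nu + alpha - tau) with (nu - tau + alpha) in SD by ring.
  pose proof (cc_sd nu tau) as CS.
  assert (Hrp : 0 < r) by lra.
  assert (Hup : Jt alpha (nu + tau) + Jt alpha (nu - tau) - 2 * Jt alpha nu
     <= 2 * tau ^ 2 + r * (2 / (1 - r) * tau ^ 2 - tau / 10)).
  { rewrite B1, B2, B0.
    set (m1 := Rmin (Jt alpha (nu + tau + alpha)) (Jt alpha (nu + tau + beta_of alpha))) in *.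
    set (m2 := Rmin (Jt alpha (nu - tau + alpha)) (Jt alpha (nu - tau + beta_of alpha))) in *.
    assert (m1 + m2 - 2 * Jt alpha (nu + alpha) <= 2 / (1 - r) * tau ^ 2 - tau / 10) by lra.
    assert (r * (m1 + m2 - 2 * Jt alpha (nu + alpha)) <= r * (2 / (1 - r) * tau ^ 2 - tau / 10))
      by (apply Rmult_le_compat_l; lra).
    lra. }
  assert (Hc : r * tau / 20 <= 2 * tau ^ 2 + r * (2 / (1 - r) * tau ^ 2)).
  { assert (Q1 : r * (2 / (1 - r) * tau ^ 2 - tau / 10) = r * (2 / (1 - r) * tau ^ 2) - r * tau / 10).
    { unfold Rminus, Rdiv. rewrite Rmult_plus_distr_l. f_equal. rewrite <- Ropp_mult_distr_r. f_equal. rewrite Rmult_assoc. reflexivity. }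
    assert (Q2 : - (r / 20) * tau = - (r * tau / 20)).
    { unfold Rdiv. rewrite <- Ropp_mult_distr_l. f_equal. rewrite !Rmult_assoc. f_equal. apply Rmult_comm. }
    rewrite Q1 in Hup. rewrite Q2 in Hlow. lra. }
  assert (r * (2 / (1 - r)) * tau ^ 2 <= r * 3 * tau ^ 2).
  { apply Rmult_le_compat_r. nra. nra. }
  replace (r * (2 / (1 - r) * tau ^ 2)) with (r * (2 / (1 - r)) * tau ^ 2) in Hc by ring.
  assert (r * tau / 20 <= 2 * tau ^ 2 + r * 3 * tau ^ 2) by lra.
  rewrite Hr in *. nra.
Qed.

Lemma T_in_I alpha nu y (Halpha : PI / 8 < alpha < 3 * PI / 8) :
  in_I alpha nu y -> in_I alpha nu (Tmap alpha nu y).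
Proof.
  pose proof PI_bounds. unfold in_I, Tmap, beta_of. destruct (Rlt_dec y nu); lra.
Qed.

Lemma deriv_shift (alpha y g : R) :
  ex_derive (Jt alpha) y ->
  (exists d, 0 < d /\ forall z, Rabs (z - (y + g)) < d ->
      Jt alpha z = / r * (Jt alpha (z - g) - cc (z - g))) ->
  ex_derive (Jt alpha) (y + g).
Proof.
  intros Hd [d [Hd0 Hz]].
  apply ex_derive_ext_loc with (f := fun z => / r * (Jt alpha (z - g) - cc (z - g))).
  - exists (mkposreal d Hd0). intros z Hzz. symmetry. apply Hz. exact Hzz.
  - apply (ex_derive_comp (fun w => / r * (Jt alpha w - cc w)) (fun z => z - g)).
    + replace (y + g - g) with y by ring. apply ex_derive_scal.
      apply (ex_derive_minus (Jt alpha) cc). exact Hd. unfold cc. auto_derive. auto.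
    + auto_derive. auto.
Qed.

Lemma prop_step alpha nu
  (Halpha : PI / 8 < alpha < 3 * PI / 8)
  (Hnu : PI / 4 - alpha - (1/100) < nu < PI / 4 - alpha + (1/100))
  (Hroot : DJt alpha nu = 0) (y : R) :
  in_I alpha nu y -> y <> nu -> ex_derive (Jt alpha) y -> ex_derive (Jt alpha) (Tmap alpha nu y).
Proof.
  intros HI Hne Hd. pose proof PI_bounds. pose proof Lam_val.
  assert (Hr : r = 1/10000) by apply r_val.
  assert (HDlip : forall a b, Rabs (DJt alpha a - DJt alpha b) <= 2 * (2 + Lam) * Rabs (a - b)).
  { intros a b. unfold DJt.
    pose proof (J_lip alpha (a + alpha) (b + alpha)) as H1.
    pose proof (J_lip alpha (a + beta_of alpha) (b + beta_of alpha)) as H2.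
    replace (a + alpha - (b + alpha)) with (a - b) in H1 by ring.
    replace (a + beta_of alpha - (b + beta_of alpha)) with (a - b) in H2 by ring.
    replace (Jt alpha (a + alpha) - Jt alpha (a + beta_of alpha) - (Jt alpha (b + alpha) - Jt alpha (b + beta_of alpha)))
      with ((Jt alpha (a + alpha) - Jt alpha (b + alpha)) - (Jt alpha (a + beta_of alpha) - Jt alpha (b + beta_of alpha))) by ring.
    eapply Rle_trans. apply Rabs_triang. rewrite Rabs_Ropp. lra. }
  set (L := 2 * (2 + Lam)) in HDlip. assert (HL : 0 < L) by (unfold L; lra).
  unfold in_I in HI.
  unfold Tmap. destruct (Rlt_dec y nu) as [Hlt|Hge].
  - assert (HD : DJt alpha y <= (y - nu) / 10) by (apply D_neg; auto; lra).
    apply deriv_shift; auto.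
    exists ((nu - y) / (20 * L)). split. apply Rdiv_lt_0_compat; lra.
    intros z Hz.
    pose proof (HDlip (z - alpha) y) as H1.
    replace (z - alpha - y) with (z - (y + alpha)) in H1 by ring.
    assert (H2 : L * Rabs (z - (y + alpha)) < L * ((nu - y) / (20 * L))) by (apply Rmult_lt_compat_l; auto).
    replace (L * ((nu - y) / (20 * L))) with ((nu - y) / 20) in H2 by (field; lra).
    assert (H3 : DJt alpha (z - alpha) < 0) by (apply Rabs_le_between in H1; lra).
    unfold DJt in H3. replace (z - alpha + alpha) with z in H3 by ring.
    pose proof (J_bellman alpha (z - alpha)) as H4. replace (z - alpha + alpha) with z in H4 by ring.
    rewrite Rmin_left in H4 by lra. rewrite H4. field. lra.
  - assert (Hgt : nu < y) by (destruct (Rle_lt_or_eq_dec nu y); [lra| |]; auto; congruence).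
    assert (HD : (y - nu) / 10 <= DJt alpha y) by (apply D_pos; auto; lra).
    apply deriv_shift; auto.
    exists ((y - nu) / (20 * L)). split. apply Rdiv_lt_0_compat; lra.
    intros z Hz.
    pose proof (HDlip (z - beta_of alpha) y) as H1.
    replace (z - beta_of alpha - y) with (z - (y + beta_of alpha)) in H1 by ring.
    assert (H2 : L * Rabs (z - (y + beta_of alpha)) < L * ((y - nu) / (20 * L))) by (apply Rmult_lt_compat_l; auto).
    replace (L * ((y - nu) / (20 * L))) with ((y - nu) / 20) in H2 by (field; lra).
    assert (H3 : 0 < DJt alpha (z - beta_of alpha)) by (apply Rabs_le_between in H1; lra).
    unfold DJt in H3. replace (z - beta_of alpha + beta_of alpha) with z in H3 by ring.
    pose proof (J_bellman alpha (z - beta_of alpha)) as H4.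
    replace (z - beta_of alpha + beta_of alpha) with z in H4 by ring.
    rewrite Rmin_right in H4 by lra. rewrite H4. field. lra.
Qed.

Theorem lemma11 (alpha nu : R)
  (Halpha : PI / 8 < alpha < 3 * PI / 8)
  (Hirr : ~ exists q : Q, alpha / PI = Q2R q)
  (Hnu : PI / 4 - alpha - (1/100) < nu < PI / 4 - alpha + (1/100))
  (Hroot : DJt alpha nu = 0) :
  forall (k : nat) (y : R),
    in_I alpha nu y -> Nat.iter k (Tmap alpha nu) y = nu ->
    ~ ex_derive (Jt alpha) y.
Proof.
  intros k. induction k as [|k IH]; intros y HI Hit.
  - simpl in Hit. subst y. apply no_deriv_nu; auto.
  - rewrite Nat.iter_succ_r in Hit. intros Hd.
    destruct (Req_dec y nu) as [->|Hne].
    + apply (no_deriv_nu alpha nu); auto.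
    + apply (IH (Tmap alpha nu y)); auto.
      * apply T_in_I; auto.
      * apply prop_step; auto.
Qed.
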